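(* Assume the CFL condition $0\le \lambda \sup_{w\ge 1} W'(w)\le 1$, let $(y_{0,i})_{i\in\mathbb Z}$ be a bounded sequence with $y_{0,i}\ge1$, let $(w^n_i)$ be the solution of the scheme, and set $(\Delta\widehat w)^n=\sup_i|w^n_{i+1}-w^n_i|$ and $t^n=n\Delta t$. Then there is a constant $C$ independent of $n$, $\Delta z$, $\Delta t$ and $\alpha$ (e.g. $C=2\|W'\|_\infty\Phi(0)$) such that for all $n\ge0$ $$(\Delta\widehat w)^n\le (\Delta\widehat w)^0\exp\Bigl(\frac{C}{\alpha}t^n\Bigr),\qquad \sup_i|w^{n+1}_i-w^n_i|\le \lambda\,\|W'\|_\infty\,(\Delta\widehat w)^0\exp\Bigl(\frac{C}{\alpha}t^n\Bigr),$$ where $\|W'\|_\infty=\sup_{w\ge1}|W'(w)|$.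
   Context: Kernel: $\Phi:[0,\infty)\to[0,\infty)$ is non-increasing with $\int_0^\infty\Phi(z)\,dz=1$ and $\int_0^\infty z\Phi(z)\,dz<\infty$; for $\alpha>0$, $\Phi_\alpha(z)=\alpha^{-1}\Phi(z/\alpha)$. Flux: $V\in C^1([0,\infty))$ is non-increasing and $W:[1,\infty)\to\mathbb R$, $W(w)=V(1/w)$. Discretization: $\Delta z>0$, $\Delta t>0$, $\lambda=\Delta t/\Delta z$, $z_j=(j-\tfrac12)\Delta z$ for $j\in\tfrac12\mathbb Z$, and for integers $j\ge i$, $\Phi_{ij\alpha}=\int_{z_{j-1/2}}^{z_{j+1/2}}\Phi_\alpha(\zeta-z_{i-1/2})\,d\zeta$. The scheme: $w^0_i=\sum_{j\ge i}\Phi_{ij\alpha}y_{0,j}$ and $w^{n+1}_i=w^n_i+\lambda(\overline W^{\,n}_{i+1/2}-\overline W^{\,n}_{i-1/2})$ for $n\ge0$, where $\overline W^{\,n}_{i-1/2}=\sum_{j\ge i}\Phi_{ij\alpha}W(w^n_j)$. *)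

(* Defs.v *)
From Stdlib Require Import Reals.
From Coquelicot Require Import Coquelicot.
Open Scope R_scope.

Definition Phi_alpha (Phi : R -> R) (alpha z : R) : R := / alpha * Phi (z / alpha).

(* Grid points z_j = (j - 1/2) dz, for j in (1/2)Z (j given as a real). *)
Definition zpt (dz j : R) : R := (j - / 2) * dz.

Definition Phi_ij (Phi : R -> R) (dz alpha : R) (i j : Z) : R :=
  RInt (fun zeta => Phi_alpha Phi alpha (zeta - zpt dz (IZR i - / 2)))
       (zpt dz (IZR j - / 2)) (zpt dz (IZR j + / 2)).

Definition nlsum (Phi : R -> R) (dz alpha : R) (f : Z -> R) (i : Z) : R :=
  Series (fun k : nat => Phi_ij Phi dz alpha i (i + Z.of_nat k)%Z * f (i + Z.of_nat k)%Z).

Definition Wf (V : R -> R) (w : R) : R := V (/ w).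

(* The scheme: w^0_i = sum_{j>=i} Phi_{ij} y_{0,j};
   w^{n+1}_i = w^n_i + lambda (Wbar^n_{i+1/2} - Wbar^n_{i-1/2}),
   with Wbar^n_{i-1/2} = sum_{j>=i} Phi_{ij} W(w^n_j)  (= nlsum ... i). *)
Fixpoint scheme (Phi V : R -> R) (dz dt alpha : R) (y0 : Z -> R) (n : nat) : Z -> R :=
  match n with
  | O => nlsum Phi dz alpha y0
  | S m =>
      let u := scheme Phi V dz dt alpha y0 m in
      let Wbar := nlsum Phi dz alpha (fun j => Wf V (u j)) in
      fun i => u i + (dt / dz) * (Wbar (i + 1)%Z - Wbar i)
  end.

Definition supWp (V : R -> R) : Rbar :=
  Lub_Rbar (fun x => exists w, 1 <= w /\ x = Derive (Wf V) w).

Definition normWp (V : R -> R) : R :=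
  real (Lub_Rbar (fun x => exists w, 1 <= w /\ x = Rabs (Derive (Wf V) w))).

Definition supZ (u : Z -> R) : Rbar :=
  Lub_Rbar (fun x => exists i : Z, x = Rabs (u i)).

Definition C1_nonneg (V dV : R -> R) : Prop :=
  (forall x, 0 < x -> is_derive V x (dV x)) /\
  filterlim (fun h => (V h - V 0) / h) (at_right 0) (locally (dV 0)) /\
  (forall x, 0 <= x ->
     filterlim dV (within (fun y => 0 <= y) (locally x)) (locally (dV x))).

(* Main.v *)
Require Import Defs.
From Stdlib Require Import Reals Lra Lia ZArith.
From Coquelicot Require Import Coquelicot.
Open Scope R_scope.


Lemma Series_nonneg (a : nat -> R) : (forall n, 0 <= a n) -> ex_series a -> 0 <= Series a.
Proof.
  intros H E.
  assert (H0 : Series (fun _ => 0) = 0).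
  { rewrite (Series_ext _ (fun n => 0 * a n)) by (intros; ring).
    rewrite Series_scal_l; ring. }
  rewrite <- H0. apply Series_le; auto. intros n; split; [lra| auto].
Qed.

Lemma ES (h x : nat -> R) (B : R) :
  (forall k, 0 <= h k) -> ex_series h -> (forall k, Rabs (x k) <= B) ->
  ex_series (fun k => h k * x k).
Proof.
  intros H0 Hs Hb.
  apply (@ex_series_le R_AbsRing R_CompleteNormedModule _ (fun k => B * h k)).
  - intros n. change (norm (h n * x n)) with (Rabs (h n * x n)).
    rewrite Rabs_mult, (Rabs_pos_eq (h n)) by auto.
    rewrite Rmult_comm. apply Rmult_le_compat_r; auto.
  - apply (ex_series_scal_l B h) in Hs. exact Hs.
Qed.

Lemma ESabs (h x : nat -> R) (B : R) :
  (forall k, 0 <= h k) -> ex_series h -> (forall k, Rabs (x k) <= B) ->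
  ex_series (fun k => Rabs (h k * x k)).
Proof.
  intros H0 Hs Hb.
  apply (ex_series_ext (fun k => h k * Rabs (x k))).
  - intros n. rewrite Rabs_mult, (Rabs_pos_eq (h n)) by auto. reflexivity.
  - apply (ES h _ B); auto. intros k; rewrite Rabs_Rabsolu; auto.
Qed.

Lemma SB (h x : nat -> R) (B : R) :
  (forall k, 0 <= h k) -> ex_series h -> (forall k, Rabs (x k) <= B) ->
  Rabs (Series (fun k => h k * x k)) <= B * Series h.
Proof.
  intros H0 Hs Hb.
  eapply Rle_trans. apply Series_Rabs. apply (ESabs h x B); auto.
  rewrite <- Series_scal_l. apply Series_le.
  - intros n; split. apply Rabs_pos.
    rewrite Rabs_mult, (Rabs_pos_eq (h n)) by auto.
    rewrite Rmult_comm. apply Rmult_le_compat_r; auto.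
  - apply (ex_series_scal_l B h) in Hs. exact Hs.
Qed.

Lemma ex_series_shift (g : nat -> R) : ex_series g -> ex_series (fun k => g (S k)).
Proof. intros H. apply ex_series_incr_1 in H. exact H. Qed.

Lemma ex_series_diff (g : nat -> R) : ex_series g -> ex_series (fun k => g k - g (S k)).
Proof.
  intros H. apply (ex_series_ext (fun k => plus (g k) (opp (g (S k))))).
  intros; reflexivity.
  apply (@ex_series_minus R_AbsRing R_NormedModule); auto. apply ex_series_shift; auto.
Qed.

Lemma TEL (g : nat -> R) : ex_series g -> Series (fun k => g k - g (S k)) = g O.
Proof.
  intros H. rewrite Series_minus; auto. rewrite (Series_incr_1 g) by auto. ring.
  apply ex_series_shift; auto.
Qed.

Lemma KEY (g x : nat -> R) (B : R) :
  (forall k, 0 <= g k) -> ex_series g -> (forall k, Rabs (x k) <= B) ->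
  Series (fun k => g k * x (S k)) - Series (fun k => g k * x k)
  = - g O * x O + Series (fun k => (g k - g (S k)) * x (S k)).
Proof.
  intros H0 Hs Hb.
  assert (E1 : ex_series (fun k => g k * x (S k))) by (apply (ES g _ B); auto).
  assert (E2 : ex_series (fun k => g (S k) * x (S k))).
  { apply (ES (fun k => g (S k)) (fun k => x (S k)) B); auto. apply ex_series_shift; auto. }
  rewrite (Series_incr_1 (fun k => g k * x k)) by (apply (ES g _ B); auto).
  rewrite (Series_ext (fun k => (g k - g (S k)) * x (S k))
             (fun k => g k * x (S k) - g (S k) * x (S k))) by (intros; ring).
  rewrite Series_minus by auto. ring.
Qed.

Lemma g0_le1 (g : nat -> R) : (forall k, 0 <= g k) -> is_series g 1 -> g O <= 1.
Proof.
  intros H0 Hs. assert (E : ex_series g) by (exists 1; auto).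
  apply is_series_unique in Hs.
  rewrite (Series_incr_1 g E) in Hs.
  assert (0 <= Series (fun k => g (S k))).
  { apply Series_nonneg; auto. apply ex_series_shift; auto. }
  lra.
Qed.

Definition nl (g : nat -> R) (f : Z -> R) (i : Z) : R :=
  Series (fun k => g k * f (i + Z.of_nat k)%Z).

Lemma nl_succ (g : nat -> R) (f : Z -> R) (i : Z) :
  nl g f (i + 1)%Z = Series (fun k => g k * f (i + Z.of_nat (S k))%Z).
Proof.
  unfold nl. apply Series_ext. intros k. f_equal. f_equal. lia.
Qed.

Lemma nl_diff (g : nat -> R) (f : Z -> R) (B : R) (i : Z) :
  (forall k, 0 <= g k) -> ex_series g -> (forall j, Rabs (f j) <= B) ->
  nl g f (i + 1)%Z - nl g f i = Series (fun k => g k * (f (i + Z.of_nat k + 1)%Z - f (i + Z.of_nat k)%Z)).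
Proof.
  intros H0 Hs Hb. rewrite nl_succ. unfold nl.
  rewrite <- Series_minus.
  - apply Series_ext; intros k. rewrite Nat2Z.inj_succ.
    replace (i + Z.succ (Z.of_nat k))%Z with (i + Z.of_nat k + 1)%Z by lia. ring.
  - apply (ES g (fun k => f (i + Z.of_nat (S k))%Z) B); auto.
  - apply (ES g (fun k => f (i + Z.of_nat k)%Z) B); auto.
Qed.

Definition step (g : nat -> R) (W : R -> R) (lam : R) (u : Z -> R) : Z -> R :=
  fun i => u i + lam * (nl g (fun j => W (u j)) (i + 1)%Z - nl g (fun j => W (u j)) i).

Lemma dWbound (W : R -> R) (Sw : R) :
  (forall x y, 1 <= x -> x <= y -> 0 <= W y - W x <= Sw * (y - x)) ->
  forall x y, 1 <= x -> 1 <= y -> Rabs (W y - W x) <= Sw * Rabs (y - x).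
Proof.
  intros H x y Hx Hy. destruct (Rle_dec x y) as [Hxy|Hxy].
  - destruct (H x y Hx Hxy). rewrite !Rabs_pos_eq by lra. lra.
  - destruct (H y x Hy) as [A B]; [lra|].
    rewrite Rabs_left1 by lra. rewrite Rabs_left1 by lra. lra.
Qed.




Lemma B1 (g : nat -> R) (W : R -> R) (lam Sw Wb : R) (u : Z -> R)
  (Hg0 : forall k, 0 <= g k) (Hgd : forall k, g (S k) <= g k) (Hgs : is_series g 1)
  (HWm : forall x y, 1 <= x -> x <= y -> 0 <= W y - W x <= Sw * (y - x))
  (HWb : forall x, 1 <= x -> Rabs (W x) <= Wb)
  (Hlam : 0 <= lam) (HS : 0 <= Sw) (HCFL : lam * Sw <= 1) :
  (forall i, 1 <= u i) -> forall i, 1 <= step g W lam u i.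
Proof.
  intros Hu i.
  assert (Eg : ex_series g) by (exists 1; auto).
  assert (Hg01 := g0_le1 g Hg0 Hgs).
  set (x := fun k : nat => W (u (i + Z.of_nat k)%Z)).
  assert (Hxb : forall k, Rabs (x k) <= Wb) by (intros; apply HWb; auto).
  unfold step. rewrite nl_succ. unfold nl.
  change (Series (fun k => g k * W (u (i + Z.of_nat (S k))%Z))) with (Series (fun k => g k * x (S k))).
  change (Series (fun k => g k * W (u (i + Z.of_nat k)%Z))) with (Series (fun k => g k * x k)).
  rewrite (KEY g x Wb) by auto.
  assert (Eh : ex_series (fun k => g k - g (S k))) by (apply ex_series_diff; auto).
  assert (Hh0 : forall k, 0 <= g k - g (S k)) by (intros k; specialize (Hgd k); lra).
  assert (Hser : W 1 * g O <= Series (fun k => (g k - g (S k)) * x (S k))).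
  { assert (0 <= Series (fun k => (g k - g (S k)) * (x (S k) - W 1))).
    { apply Series_nonneg.
      - intros k. apply Rmult_le_pos; auto.
        destruct (HWm 1 (u (i + Z.of_nat (S k))%Z)); [lra| apply Hu| unfold x; lra].
      - apply (ES _ _ (Wb + Rabs (W 1))); auto. intros k.
        eapply Rle_trans. apply Rabs_triang. rewrite Rabs_Ropp. specialize (Hxb (S k)). lra. }
    rewrite (Series_ext _ (fun k => (g k - g (S k)) * x (S k) - W 1 * (g k - g (S k)))) in H
      by (intros; ring).
    rewrite Series_minus in H.
    - rewrite Series_scal_l, TEL in H by auto. lra.
    - apply (ES _ _ Wb); auto.
    - apply (ex_series_scal_l (W 1)) in Eh. exact Eh. }
  assert (Hx0 : x O - W 1 <= Sw * (u i - 1)).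
  { unfold x. simpl. rewrite Z.add_0_r. destruct (HWm 1 (u i)); [lra| apply Hu| lra]. }
  assert (Hui := Hu i).
  assert (0 <= lam * g O * Sw <= 1).
  { split. apply Rmult_le_pos; [apply Rmult_le_pos|]; auto.
    specialize (Hg0 O). nra. }
  assert (lam * (g O * (x O - W 1)) <= lam * g O * Sw * (u i - 1)).
  { assert (g O * (x O - W 1) <= g O * (Sw * (u i - 1))) by (apply Rmult_le_compat_l; auto).
    assert (lam * (g O * (x O - W 1)) <= lam * (g O * (Sw * (u i - 1)))) by (apply Rmult_le_compat_l; auto).
    lra. }
  assert (lam * g O * Sw * (u i - 1) <= u i - 1).
  { assert (0 <= u i - 1) by lra. nra. }
  assert (lam * (W 1 * g O) <= lam * Series (fun k => (g k - g (S k)) * x (S k)))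
    by (apply Rmult_le_compat_l; auto).
  nra.
Qed.

Lemma B23 (g : nat -> R) (W : R -> R) (lam Sw Wb D : R) (u : Z -> R)
  (Hg0 : forall k, 0 <= g k) (Hgd : forall k, g (S k) <= g k) (Hgs : is_series g 1)
  (HWm : forall x y, 1 <= x -> x <= y -> 0 <= W y - W x <= Sw * (y - x))
  (HWb : forall x, 1 <= x -> Rabs (W x) <= Wb)
  (Hlam : 0 <= lam) (HS : 0 <= Sw) (HCFL : lam * Sw <= 1) :
  (forall i, 1 <= u i) -> (forall j, Rabs (u (j + 1)%Z - u j) <= D) ->
  (forall i, Rabs (step g W lam u (i + 1)%Z - step g W lam u i) <= (1 + lam * g O * Sw) * D) /\
  (forall i, Rabs (step g W lam u i - u i) <= lam * Sw * D).
Proof.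
  intros Hu HD.
  assert (Eg : ex_series g) by (exists 1; auto).
  assert (Hg01 := g0_le1 g Hg0 Hgs).
  assert (Hsum : Series g = 1) by (apply is_series_unique; auto).
  set (f := fun j => W (u j)).
  assert (Hfb : forall j, Rabs (f j) <= Wb) by (intros; apply HWb; auto).
  set (d := fun j => f (j + 1)%Z - f j).
  assert (Hdb : forall j, Rabs (d j) <= Wb + Wb).
  { intros j. unfold d. eapply Rle_trans. apply Rabs_triang. rewrite Rabs_Ropp.
    pose proof (Hfb (j+1)%Z); pose proof (Hfb j); lra. }
  assert (HdD : forall j, Rabs (d j) <= Sw * D).
  { intros j. unfold d, f. eapply Rle_trans. apply (dWbound W Sw HWm); apply Hu.
    apply Rmult_le_compat_l; auto. }
  assert (HD0 : 0 <= D) by (eapply Rle_trans; [apply Rabs_pos| apply (HD 0%Z)]).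
  assert (Hinc : forall j, nl g f (j + 1)%Z - nl g f j = Series (fun k => g k * d (j + Z.of_nat k)%Z)).
  { intros j. rewrite (nl_diff g f Wb j) by auto. reflexivity. }
  split.
  - intros i. unfold step. fold f.
    set (x := fun k : nat => d (i + Z.of_nat k)%Z).
    assert (E : (u (i + 1)%Z + lam * (nl g f (i + 1 + 1)%Z - nl g f (i + 1)%Z) -
        (u i + lam * (nl g f (i + 1)%Z - nl g f i))) =
        (u (i+1)%Z - u i) + lam * (Series (fun k => g k * x (S k)) - Series (fun k => g k * x k))).
    { rewrite !Hinc. unfold x.
      rewrite (Series_ext (fun k => g k * d (i + 1 + Z.of_nat k)%Z)
                (fun k => g k * d (i + Z.of_nat (S k))%Z)).
      ring. intros k. f_equal. f_equal. lia. }
    rewrite E. rewrite (KEY g x (Wb + Wb)) by (auto; intros; apply Hdb).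
    assert (Eh : ex_series (fun k => g k - g (S k))) by (apply ex_series_diff; auto).
    assert (Hh0 : forall k, 0 <= g k - g (S k)) by (intros k; specialize (Hgd k); lra).
    assert (Hs : Rabs (Series (fun k => (g k - g (S k)) * x (S k))) <= Sw * D * g O).
    { rewrite <- (TEL g) by auto. apply SB; auto. intros; apply HdD. }
    assert (Hloc : Rabs ((u (i+1)%Z - u i) + lam * (- g O * x O)) <= D).
    { unfold x. simpl. rewrite Z.add_0_r. unfold d, f.
      assert (Hl : 0 <= lam * g O * Sw <= 1).
      { split. apply Rmult_le_pos; [apply Rmult_le_pos|]; auto.
        specialize (Hg0 O). nra. }
      specialize (HD i). specialize (Hg0 O).
      destruct (Rle_dec (u i) (u (i+1)%Z)) as [H|H].
      - destruct (HWm (u i) (u (i+1)%Z) (Hu i) H) as [A B].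
        assert (lam * g O * (W (u (i + 1)%Z) - W (u i)) <= lam * g O * Sw * (u (i + 1)%Z - u i)).
        { rewrite Rmult_assoc with (r1 := lam * g O). apply Rmult_le_compat_l; nra. }
        assert (0 <= lam * g O * (W (u (i + 1)%Z) - W (u i))) by (apply Rmult_le_pos; nra).
        assert (lam * g O * Sw * (u (i + 1)%Z - u i) <= u (i + 1)%Z - u i) by nra.
        rewrite Rabs_pos_eq in HD by lra. rewrite Rabs_pos_eq; nra.
      - destruct (HWm (u (i+1)%Z) (u i) (Hu _)) as [A B]; [lra|].
        assert (lam * g O * (W (u i) - W (u (i + 1)%Z)) <= lam * g O * Sw * (u i - u (i + 1)%Z)).
        { rewrite Rmult_assoc with (r1 := lam * g O). apply Rmult_le_compat_l; nra. }
        assert (0 <= lam * g O * (W (u i) - W (u (i + 1)%Z))) by (apply Rmult_le_pos; nra).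
        assert (lam * g O * Sw * (u i - u (i + 1)%Z) <= u i - u (i + 1)%Z) by nra.
        rewrite Rabs_left1 in HD by lra. rewrite Rabs_left1; nra. }
    replace (u (i + 1)%Z - u i + lam * (- g O * x O + Series (fun k => (g k - g (S k)) * x (S k))))
      with ((u (i+1)%Z - u i) + lam * (- g O * x O) + lam * Series (fun k => (g k - g (S k)) * x (S k))) by ring.
    eapply Rle_trans. apply Rabs_triang. rewrite Rabs_mult, (Rabs_pos_eq lam) by auto.
    assert (lam * Rabs (Series (fun k => (g k - g (S k)) * x (S k))) <= lam * (Sw * D * g O))
      by (apply Rmult_le_compat_l; auto).
    nra.
  - intros i. unfold step. fold f.
    replace (u i + lam * (nl g f (i + 1)%Z - nl g f i) - u i) with (lam * (nl g f (i + 1)%Z - nl g f i)) by ring.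
    rewrite Hinc. rewrite Rabs_mult, (Rabs_pos_eq lam) by auto.
    rewrite Rmult_assoc. apply Rmult_le_compat_l; auto.
    eapply Rle_trans. apply (SB g _ (Sw * D)); auto.
    rewrite Hsum. lra.
Qed.

Lemma A0 (Phi : R -> R) (Phi_int1 : is_RInt_gen Phi (at_point 0) (Rbar_locally p_infty) 1) :
  forall b, 0 <= b -> ex_RInt Phi 0 b.
Proof.
  intros b Hb.
  unfold is_RInt_gen, filterlimi, filter_le, filtermapi in Phi_int1.
  destruct (Phi_int1 (fun _ => True)) as [Q R' HQ HR Hp].
  { apply filter_true. }
  destruct HR as [M HM].
  set (b' := Rmax b M + 1).
  destruct (Hp 0 b' HQ) as [y [Hy _]].
  { apply HM. unfold b'. pose proof (Rmax_r b M). lra. }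
  apply (@ex_RInt_Chasles_1 R_CompleteNormedModule _ 0 b b'). split; auto. unfold b'. pose proof (Rmax_l b M). lra.
  exists y. exact Hy.
Qed.

Lemma A0' (Phi : R -> R) (Phi_int1 : is_RInt_gen Phi (at_point 0) (Rbar_locally p_infty) 1) :
  forall a b, 0 <= a -> a <= b -> ex_RInt Phi a b.
Proof.
  intros a b Ha Hab. apply (@ex_RInt_Chasles_2 R_CompleteNormedModule _ 0 a b). lra. apply A0; auto. lra.
Qed.

Lemma L1 (Phi : R -> R) (Phi_int1 : is_RInt_gen Phi (at_point 0) (Rbar_locally p_infty) 1) :
  forall eps : posreal, exists M, forall b, M < b -> Rabs (RInt Phi 0 b - 1) < eps.
Proof.
  intros eps.
  unfold is_RInt_gen, filterlimi, filter_le, filtermapi in Phi_int1.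
  destruct (Phi_int1 (ball 1 eps)) as [Q R' HQ HR Hp].
  { apply locally_ball. }
  destruct HR as [M HM]. exists M. intros b Hb.
  destruct (Hp 0 b HQ (HM b Hb)) as [y [Hy Hball]].
  simpl in Hy. rewrite (is_RInt_unique _ _ _ _ Hy). exact Hball.
Qed.

Definition gam (Phi : R -> R) (h : R) (k : nat) : R := RInt Phi (INR k * h) (INR k * h + h).

Lemma A1 (Phi : R -> R) (Phi_int1 : is_RInt_gen Phi (at_point 0) (Rbar_locally p_infty) 1)
  (dz alpha : R) (Hdz : 0 < dz) (Ha : 0 < alpha) (i : Z) (k : nat) :
  Phi_ij Phi dz alpha i (i + Z.of_nat k)%Z = gam Phi (dz / alpha) k.
Proof.
  unfold Phi_ij, gam.
  set (c := zpt dz (IZR i - / 2)).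
  assert (Ea : / alpha * zpt dz (IZR (i + Z.of_nat k) - / 2) + - c / alpha = INR k * (dz / alpha)).
  { unfold c, zpt. rewrite plus_IZR, <- INR_IZR_INZ. field. lra. }
  assert (Eb : / alpha * zpt dz (IZR (i + Z.of_nat k) + / 2) + - c / alpha = INR k * (dz / alpha) + dz / alpha).
  { unfold c, zpt. rewrite plus_IZR, <- INR_IZR_INZ. field. lra. }
  transitivity (RInt (fun y => scal (/ alpha) (Phi (/ alpha * y + - c / alpha)))
                  (zpt dz (IZR (i + Z.of_nat k) - / 2)) (zpt dz (IZR (i + Z.of_nat k) + / 2))).
  { apply RInt_ext. intros x _. unfold Phi_alpha. unfold scal; simpl; unfold mult; simpl.
    f_equal. f_equal. field. lra. }
  rewrite (@RInt_comp_lin R_CompleteNormedModule Phi). rewrite Ea, Eb. reflexivity.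
  rewrite Ea, Eb. apply A0'; auto.
  apply Rmult_le_pos. apply pos_INR. apply Rlt_le, Rdiv_lt_0_compat; auto.
  assert (0 < dz / alpha) by (apply Rdiv_lt_0_compat; auto). lra.
Qed.

Lemma A2 (Phi : R -> R) (Phi_int1 : is_RInt_gen Phi (at_point 0) (Rbar_locally p_infty) 1)
  (Phi_nonneg : forall z, 0 <= z -> 0 <= Phi z) (h : R) (Hh : 0 < h) (k : nat) :
  0 <= gam Phi h k.
Proof.
  unfold gam. assert (0 <= INR k * h) by (apply Rmult_le_pos; [apply pos_INR| lra]).
  apply RInt_ge_0. lra. apply A0'; auto; lra.
  intros x Hx. apply Phi_nonneg. lra.
Qed.

Lemma A3 (Phi : R -> R) (Phi_int1 : is_RInt_gen Phi (at_point 0) (Rbar_locally p_infty) 1)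
  (Phi_noninc : forall z1 z2, 0 <= z1 -> z1 <= z2 -> Phi z2 <= Phi z1)
  (h : R) (Hh : 0 < h) (k : nat) :
  gam Phi h (S k) <= gam Phi h k.
Proof.
  unfold gam. assert (0 <= INR k * h) by (apply Rmult_le_pos; [apply pos_INR| lra]).
  assert (E1 : 1 * (INR k * h) + h = INR (S k) * h) by (rewrite S_INR; ring).
  assert (E2 : 1 * (INR k * h + h) + h = INR (S k) * h + h) by (rewrite S_INR; ring).
  assert (Hex : ex_RInt Phi (1 * (INR k * h) + h) (1 * (INR k * h + h) + h)).
  { rewrite E1, E2. apply A0'; auto. rewrite <- E1. lra. lra. }
  rewrite <- E2, <- E1. rewrite <- (@RInt_comp_lin R_CompleteNormedModule Phi) by exact Hex.
  apply RInt_le. lra. apply (@ex_RInt_comp_lin R_NormedModule); auto. apply A0'; auto; lra.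
  intros x Hx. unfold scal; simpl; unfold mult; simpl.
  rewrite Rmult_1_l, Rmult_1_l. apply Phi_noninc; lra.
Qed.

Lemma A5 (Phi : R -> R) (Phi_int1 : is_RInt_gen Phi (at_point 0) (Rbar_locally p_infty) 1)
  (Phi_noninc : forall z1 z2, 0 <= z1 -> z1 <= z2 -> Phi z2 <= Phi z1)
  (h : R) (Hh : 0 < h) : gam Phi h O <= h * Phi 0.
Proof.
  unfold gam. simpl INR. rewrite Rmult_0_l, Rplus_0_l.
  eapply Rle_trans. apply (RInt_le Phi (fun _ => Phi 0)). lra. apply A0; [auto|lra].
  apply ex_RInt_const. intros x Hx. apply Phi_noninc; lra.
  rewrite RInt_const. unfold scal; simpl; unfold mult; simpl. lra.
Qed.

Lemma A4 (Phi : R -> R) (Phi_int1 : is_RInt_gen Phi (at_point 0) (Rbar_locally p_infty) 1)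
  (Phi_nonneg : forall z, 0 <= z -> 0 <= Phi z) (h : R) (Hh : 0 < h) :
  is_series (gam Phi h) 1.
Proof.
  assert (Hp : forall N, sum_n (gam Phi h) N = RInt Phi 0 (INR (S N) * h)).
  { induction N.
    - rewrite sum_O. unfold gam. simpl INR. f_equal; ring.
    - rewrite sum_Sn, IHN. unfold gam. change plus with Rplus.
      assert (0 <= INR (S N) * h) by (apply Rmult_le_pos; [apply pos_INR| lra]).
      replace (INR (S (S N)) * h) with (INR (S N) * h + h) by (rewrite (S_INR (S N)); ring).
      change (plus (RInt Phi 0 (INR (S N) * h)) (RInt Phi (INR (S N) * h) (INR (S N) * h + h)) =
              RInt Phi 0 (INR (S N) * h + h)).
      apply RInt_Chasles. apply A0; auto. apply A0'; auto; lra. }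
  change (is_lim_seq (sum_n (gam Phi h)) 1).
  apply is_lim_seq_spec. intros eps.
  destruct (L1 Phi Phi_int1 eps) as [M HM].
  pose proof is_lim_seq_INR as HI. apply is_lim_seq_spec in HI.
  destruct (HI (M / h)) as [N HN]. exists N. intros n Hn.
  rewrite Hp. apply HM. specialize (HN n Hn).
  rewrite S_INR.
  assert (M < INR n * h).
  { apply (Rmult_lt_compat_r h) in HN; auto. unfold Rdiv in HN.
    rewrite Rmult_assoc, Rinv_l, Rmult_1_r in HN; lra. }
  lra.
Qed.

Lemma Wmono (V : R -> R) (V_noninc : forall x1 x2, 0 <= x1 -> x1 <= x2 -> V x2 <= V x1) :
  forall x y, 0 < x -> x <= y -> Wf V x <= Wf V y.
Proof.
  intros x y Hx Hxy. unfold Wf. apply V_noninc.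
  apply Rlt_le, Rinv_0_lt_compat; lra.
  apply Rinv_le_contravar; lra.
Qed.

Lemma Wbnd (V : R -> R) (V_noninc : forall x1 x2, 0 <= x1 -> x1 <= x2 -> V x2 <= V x1) :
  forall x, 1 <= x -> Rabs (Wf V x) <= Rabs (V 0) + Rabs (V 1).
Proof.
  intros x Hx. unfold Wf.
  assert (H1 : 0 < / x) by (apply Rinv_0_lt_compat; lra).
  assert (H2 : / x <= 1) by (rewrite <- Rinv_1; apply Rinv_le_contravar; lra).
  pose proof (V_noninc 0 (/ x) (Rle_refl 0) (Rlt_le _ _ H1)).
  pose proof (V_noninc (/ x) 1 (Rlt_le _ _ H1) H2).
  apply Rabs_le. split.
  - pose proof (Rabs_pos (V 0)). pose proof (Rle_abs (- V 1)) as H5. rewrite Rabs_Ropp in H5. lra.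
  - pose proof (Rabs_pos (V 1)). pose proof (Rle_abs (V 0)). lra.
Qed.

Lemma Wder (V dV : R -> R) (HV : forall x, 0 < x -> is_derive V x (dV x)) :
  forall x, 0 < x -> ex_derive (Wf V) x.
Proof.
  intros x Hx. unfold Wf.
  exists (scal (- 1 / x ^ 2) (dV (/ x))).
  apply (is_derive_comp V (fun y => / y)).
  apply HV. apply Rinv_0_lt_compat; lra.
  apply (is_derive_inv (fun y => y) x 1). apply (@is_derive_id R_AbsRing). lra.
Qed.

Lemma Dnn (f : R -> R) (x : R) (Hx : 0 < x) (Hd : ex_derive f x)
  (Hm : forall a b, 0 < a -> a <= b -> f a <= f b) : 0 <= Derive f x.
Proof.
  pose proof (Derive_correct f x Hd) as H. apply is_derive_Reals in H.
  destruct (Rle_dec 0 (Derive f x)) as [Hp|Hn]; auto. exfalso.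
  set (l := Derive f x) in *.
  assert (Hl : 0 < - l / 2) by lra.
  destruct (H (- l / 2) Hl) as [del Hdel].
  set (h := Rmin (del / 2) (x / 2)).
  assert (Hh : 0 < h) by (unfold h; apply Rmin_pos; pose proof (cond_pos del); lra).
  assert (Hh2 : h < del) by (unfold h; pose proof (Rmin_l (del/2) (x/2)); pose proof (cond_pos del); lra).
  specialize (Hdel h (Rgt_not_eq _ _ Hh)).
  assert (Habs : Rabs h < del) by (rewrite Rabs_pos_eq; lra).
  specialize (Hdel Habs).
  assert (0 <= (f (x + h) - f x) / h).
  { apply Rdiv_le_0_compat; auto. assert (f x <= f (x + h)) by (apply Hm; lra). lra. }
  apply Rabs_lt_between in Hdel. lra.
Qed.

Lemma Wlip (V dV : R -> R) (HV : forall x, 0 < x -> is_derive V x (dV x))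
  (V_noninc : forall x1 x2, 0 <= x1 -> x1 <= x2 -> V x2 <= V x1) (s : R)
  (Hs : forall c, 1 <= c -> Derive (Wf V) c <= s) :
  forall x y, 1 <= x -> x <= y -> 0 <= Wf V y - Wf V x <= s * (y - x).
Proof.
  intros x y Hx Hxy. split.
  - pose proof (Wmono V V_noninc x y). lra.
  - destruct (MVT_gen (Wf V) x y (Derive (Wf V))) as [c [Hc Heq]].
    + intros z Hz. rewrite Rmin_left, Rmax_right in Hz by lra.
      apply Derive_correct. apply (Wder V dV HV). lra.
    + intros z Hz. rewrite Rmin_left, Rmax_right in Hz by lra.
      apply continuity_pt_filterlim. apply (@ex_derive_continuous R_AbsRing R_NormedModule). apply (Wder V dV HV). lra.
    + rewrite Rmin_left, Rmax_right in Hc by lra.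
      rewrite Heq. apply Rmult_le_compat_r. lra. apply Hs. lra.
Qed.

Lemma supfin (V dV : R -> R) (HV : forall x, 0 < x -> is_derive V x (dV x))
  (V_noninc : forall x1 x2, 0 <= x1 -> x1 <= x2 -> V x2 <= V x1) (r : R) (Hr : 0 < r) :
  Rbar_le (Rbar_mult r (supWp V)) 1 ->
  exists s, r * s <= 1 /\ 0 <= s /\ normWp V = s /\ (forall c, 1 <= c -> Derive (Wf V) c <= s).
Proof.
  intros Hcfl.
  assert (Hnn : forall c, 1 <= c -> 0 <= Derive (Wf V) c).
  { intros c Hc. apply Dnn. lra. apply (Wder V dV HV). lra.
    intros a b Ha Hab. apply (Wmono V V_noninc); auto. }
  assert (Hub : is_ub_Rbar (fun x => exists w, 1 <= w /\ x = Derive (Wf V) w) (supWp V))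
    by apply (Lub_Rbar_correct _).
  assert (Hnorm : normWp V = real (supWp V)).
  { unfold normWp, supWp. f_equal. apply Lub_Rbar_eqset. intros x; split.
    - intros [w [Hw ->]]. exists w. split; auto. apply Rabs_pos_eq. apply Hnn; auto.
    - intros [w [Hw ->]]. exists w. split; auto. symmetry. apply Rabs_pos_eq. apply Hnn; auto. }
  revert Hcfl Hub Hnorm. destruct (supWp V) as [s| |]; intros Hcfl Hub Hnorm.
  - exists s. simpl in Hcfl. split; auto. split.
    + pose proof (Hub (Derive (Wf V) 1) (ex_intro _ 1 (conj (Rle_refl 1) eq_refl))) as H.
      simpl in H. pose proof (Hnn 1 (Rle_refl 1)). lra.
    + split; auto. intros c Hc. exact (Hub _ (ex_intro _ c (conj Hc eq_refl))).
  - exfalso. unfold Rbar_mult, Rbar_mult' in Hcfl.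
    destruct (Rle_dec 0 r) as [H|H]; [|lra].
    destruct (Rle_lt_or_eq_dec 0 r H); [|lra]. simpl in Hcfl. exact Hcfl.
  - exfalso. exact (Hub (Derive (Wf V) 1) (ex_intro _ 1 (conj (Rle_refl 1) eq_refl))).
Qed.

Lemma LubLe (u : Z -> R) (b : R) : (forall i, Rabs (u i) <= b) -> Rbar_le (supZ u) (Finite b).
Proof.
  intros H. unfold supZ. apply (Lub_Rbar_correct _). intros x [i ->]. simpl. apply H.
Qed.

Lemma LubFin (u : Z -> R) (B : R) : (forall i, Rabs (u i) <= B) ->
  exists d, supZ u = Finite d /\ forall i, Rabs (u i) <= d.
Proof.
  intros H.
  assert (Hub : is_ub_Rbar (fun x => exists i : Z, x = Rabs (u i)) (supZ u)) by apply (Lub_Rbar_correct _).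
  assert (Hle := LubLe u B H).
  revert Hub Hle. destruct (supZ u) as [d| |]; intros Hub Hle.
  - exists d. split; auto. intros i. exact (Hub _ (ex_intro _ i eq_refl)).
  - simpl in Hle. contradiction.
  - exfalso. exact (Hub _ (ex_intro _ 0%Z eq_refl)).
Qed.

Lemma exp_pow' (x : R) (n : nat) : exp x ^ n = exp (INR n * x).
Proof.
  induction n. simpl. rewrite Rmult_0_l, exp_0. reflexivity.
  rewrite S_INR. simpl. rewrite IHn, <- exp_plus. f_equal. ring.
Qed.

Theorem lemma2p4 (Phi V : R -> R)
  (Phi_nonneg : forall z, 0 <= z -> 0 <= Phi z)
  (Phi_noninc : forall z1 z2, 0 <= z1 -> z1 <= z2 -> Phi z2 <= Phi z1)
  (Phi_int1 : is_RInt_gen Phi (at_point 0) (Rbar_locally p_infty) 1)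
  (Phi_mom : ex_RInt_gen (fun z => z * Phi z) (at_point 0) (Rbar_locally p_infty))
  (V_C1 : exists dV, C1_nonneg V dV)
  (V_noninc : forall x1 x2, 0 <= x1 -> x1 <= x2 -> V x2 <= V x1) :
  exists C : R,
    forall (dz dt alpha : R) (y0 : Z -> R),
      0 < dz -> 0 < dt -> 0 < alpha ->
      Rbar_le 0 (Rbar_mult (dt / dz) (supWp V)) ->
      Rbar_le (Rbar_mult (dt / dz) (supWp V)) 1 ->
      (exists M, forall i, Rabs (y0 i) <= M) ->
      (forall i, 1 <= y0 i) ->
      let w := scheme Phi V dz dt alpha y0 in
      let Dhat := fun n => supZ (fun i => w n (i + 1)%Z - w n i) in
      forall n : nat,
        Rbar_le (Dhat n) (Rbar_mult (Dhat O) (exp (C / alpha * (INR n * dt)))) /\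
        Rbar_le (supZ (fun i => w (S n) i - w n i))
          (Rbar_mult ((dt / dz) * normWp V * exp (C / alpha * (INR n * dt))) (Dhat O)).
Proof.
  destruct V_C1 as [dV [HV _]].
  exists (normWp V * Phi 0).
  intros dz dt alpha y0 Hdz Hdt Ha H0 Hcfl [M HM] Hy w Dhat n.
  subst Dhat.
  assert (Hlam : 0 < dt / dz) by (apply Rdiv_lt_0_compat; auto).
  destruct (supfin V dV HV V_noninc (dt / dz) Hlam Hcfl) as [s [Hls [Hs0 [Hnorm Hsd]]]].
  rewrite Hnorm.
  set (h := dz / alpha).
  assert (Hh : 0 < h) by (apply Rdiv_lt_0_compat; auto).
  set (g := gam Phi h).
  assert (Hg0 : forall k, 0 <= g k) by (intros; apply A2; auto).
  assert (Hgd : forall k, g (S k) <= g k) by (intros; apply A3; auto).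
  assert (Hgs : is_series g 1) by (apply A4; auto).
  assert (Eg : ex_series g) by (exists 1; auto).
  assert (Hsum : Series g = 1) by (apply is_series_unique; auto).
  assert (Hg05 : g O <= h * Phi 0) by (apply A5; auto).
  assert (HWm := Wlip V dV HV V_noninc s Hsd).
  assert (HWb := Wbnd V V_noninc).
  assert (Hnl : forall f i, nlsum Phi dz alpha f i = nl g f i).
  { intros f i. unfold nlsum, nl. apply Series_ext. intros k. rewrite A1; auto. }
  assert (Hstep : forall m i, w (S m) i = step g (Wf V) (dt / dz) (w m) i).
  { intros m i. unfold w. cbn [scheme]. rewrite !Hnl. unfold step. reflexivity. }
  assert (Hw0 : forall i, w O i = nl g y0 i).
  { intros i. unfold w. cbn [scheme]. apply Hnl. }
  assert (Hw0b : forall i, Rabs (w O i) <= M).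
  { intros i. rewrite Hw0. unfold nl. eapply Rle_trans. apply (SB g _ M); auto.
    rewrite Hsum. lra. }
  assert (HD0 : forall i, Rabs (w O (i + 1)%Z - w O i) <= M + M).
  { intros i. eapply Rle_trans. apply Rabs_triang. rewrite Rabs_Ropp.
    pose proof (Hw0b (i+1)%Z). pose proof (Hw0b i). lra. }
  destruct (LubFin (fun i => w O (i + 1)%Z - w O i) (M + M) HD0) as [d0 [Hd0 Hd0b]].
  assert (Hd0p : 0 <= d0) by (eapply Rle_trans; [apply Rabs_pos| apply (Hd0b 0%Z)]).
  set (rho := 1 + dt / dz * g O * s).
  assert (Hrho0 : 0 <= rho).
  { unfold rho. pose proof (Hg0 O). assert (0 <= dt / dz * g O * s).
    apply Rmult_le_pos; [apply Rmult_le_pos|]; lra. lra. }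
  assert (Hinv : forall m, (forall i, 1 <= w m i) /\
                           (forall i, Rabs (w m (i + 1)%Z - w m i) <= d0 * rho ^ m)).
  { induction m.
    - split.
      + intros i. rewrite Hw0. unfold nl. rewrite <- Hsum.
        apply Series_le.
        * intros k. split; auto. pose proof (Hg0 k). pose proof (Hy (i + Z.of_nat k)%Z).
          rewrite <- (Rmult_1_r (g k)) at 1. apply Rmult_le_compat_l; auto.
        * apply (ES g _ M); auto.
      + intros i. simpl. rewrite Rmult_1_r. apply Hd0b.
    - destruct IHm as [Hu HD].
      destruct (B23 g (Wf V) (dt / dz) s (Rabs (V 0) + Rabs (V 1)) (d0 * rho ^ m) (w m)
                  Hg0 Hgd Hgs HWm HWb (Rlt_le _ _ Hlam) Hs0 Hls Hu HD) as [HB2 _].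
      split.
      + intros i. rewrite Hstep.
        apply (B1 g (Wf V) (dt / dz) s (Rabs (V 0) + Rabs (V 1))); auto. lra.
      + intros i. rewrite !Hstep. eapply Rle_trans. apply HB2.
        simpl. fold rho. right. ring. }
  assert (Hrho : rho <= exp (s * Phi 0 / alpha * dt)).
  { assert (dt / dz * g O * s <= s * Phi 0 / alpha * dt).
    { replace (s * Phi 0 / alpha * dt) with (dt / dz * (h * Phi 0) * s)
        by (unfold h; field; split; lra).
      apply Rmult_le_compat_r; auto. apply Rmult_le_compat_l; lra. }
    pose proof (exp_ineq1_le (s * Phi 0 / alpha * dt)). unfold rho. lra. }
  assert (Hrhon : rho ^ n <= exp (s * Phi 0 / alpha * (INR n * dt))).
  { replace (s * Phi 0 / alpha * (INR n * dt)) with (INR n * (s * Phi 0 / alpha * dt)) by ring.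
    rewrite <- exp_pow'. apply pow_incr. split; auto. }
  destruct (Hinv n) as [Hu HD].
  rewrite Hd0. unfold Rbar_mult, Rbar_mult'.
  split.
  - apply LubLe. intros i. eapply Rle_trans. apply HD.
    apply Rmult_le_compat_l; auto.
  - apply LubLe. intros i. rewrite Hstep.
    destruct (B23 g (Wf V) (dt / dz) s (Rabs (V 0) + Rabs (V 1)) (d0 * rho ^ n) (w n)
                  Hg0 Hgd Hgs HWm HWb (Rlt_le _ _ Hlam) Hs0 Hls Hu HD) as [_ HB3].
    eapply Rle_trans. apply HB3.
    assert (0 <= dt / dz * s) by (apply Rmult_le_pos; lra).
    assert (d0 * rho ^ n <= d0 * exp (s * Phi 0 / alpha * (INR n * dt)))
      by (apply Rmult_le_compat_l; auto).
    replace (dt / dz * s * exp (s * Phi 0 / alpha * (INR n * dt)) * d0)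
      with (dt / dz * s * (d0 * exp (s * Phi 0 / alpha * (INR n * dt)))) by ring.
    apply Rmult_le_compat_l; auto.
Qed.
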